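(* Let $\{x_t\}$ be generated by the OE method (described in the context) and let $\{\theta_t\}$ be a sequence of nonnegative numbers. Suppose that for all $t=1,\dots,k$, $$\theta_{t+1}\gamma_{t+1}\lambda_{t+1}=\gamma_t\theta_t \qquad\text{and}\qquad \theta_{t-1}\ge 4L^2\theta_t\gamma_t^2\lambda_t^2 .$$ Then for every $x\in X$, $$\sum_{t=1}^k\theta_t\Big[\gamma_t\langle F(x_{t+1}),x_{t+1}-x\rangle+V(x_{t+1},x)\Big]-L^2\theta_k\gamma_k^2\|x_{k+1}-x\|^2\le\sum_{t=1}^k\theta_tV(x_t,x).$$
   Context: Let $X\subseteq\mathbb{R}^n$ be a nonempty closed convex set and $\|\cdot\|$ a norm on $\mathbb{R}^n$ with dual norm $\|z\|_*=\sup\{\langle x,z\rangle:\|x\|\le 1\}$. Let $F:X\to\mathbb{R}^n$ satisfy $\|F(x_1)-F(x_2)\|_*\le L\|x_1-x_2\|$ for all $x_1,x_2\in X$, for some $L>0$. Let $\omega$ be a function on $X$ that is strongly convex with modulus $1$ with respect to $\|\cdot\|$, and define the Bregman distance $V(x,y)=\omega(y)-\omega(x)-\langle\omega'(x),y-x\rangle$ for $x,y\in X$, where $\omega'(x)\in\partial\omega(x)$. The operator extrapolation (OE) method: given $x_0=x_1\in X$ and nonnegative parameters $\{\gamma_t\},\{\lambda_t\}$, for $t=1,\dots,k$ set $$x_{t+1}=\operatorname{argmin}_{x\in X}\ \gamma_t\big\langle F(x_t)+\lambda_t\big(F(x_t)-F(x_{t-1})\big),x\big\rangle+V(x_t,x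).$$
   Formalization: ω′ is also the derivative of ω along feasible directions on X: for x, y ∈ X, (ω(x+s(y−x))−ω(x))/s tends to ⟨ω′(x), y−x⟩ as s → 0⁺. The statement above fails without it. *)

(* Defs.v *)
From HB Require Import structures.
From mathcomp Require Import all_boot all_order all_algebra.
From mathcomp Require Import all_classical all_reals all_analysis.
Set Implicit Arguments. Unset Strict Implicit. Unset Printing Implicit Defensive.
Import Order.TTheory GRing.Theory Num.Theory.
Import numFieldNormedType.Exports.
Local Open Scope classical_set_scope.
Local Open Scope ring_scope.

Definition dotv (R : realType) (n : nat) (x z : 'rV[R]_n) : R :=
  \sum_(i < n) x ord0 i * z ord0 i.

Definition is_norm (R : realType) (n : nat) (N : 'rV[R]_n -> R) : Prop :=
  [/\ (forall x, N x = 0 -> x = 0),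
      (forall (a : R) x, N (a *: x) = `|a| * N x) &
      (forall x y, N (x + y) <= N x + N y)].

Definition dual_norm (R : realType) (n : nat) (N : 'rV[R]_n -> R)
  (z : 'rV[R]_n) : R :=
  sup [set dotv x z | x in [set x | N x <= 1]].

Definition is_convex_set (R : realType) (n : nat) (X : set 'rV[R]_n) : Prop :=
  forall x y (a : R), X x -> X y -> 0 <= a <= 1 -> X (a *: x + (1 - a) *: y).

Definition strongly_convex_on (R : realType) (n : nat) (N : 'rV[R]_n -> R)
  (X : set 'rV[R]_n) (omega : 'rV[R]_n -> R) (mu : R) : Prop :=
  forall x y (a : R), X x -> X y -> 0 <= a <= 1 ->
    omega (a *: x + (1 - a) *: y) <=
    a * omega x + (1 - a) * omega y - mu / 2 * a * (1 - a) * N (x - y) ^+ 2.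

Definition subgrad_on (R : realType) (n : nat) (X : set 'rV[R]_n)
  (omega : 'rV[R]_n -> R) (x g : 'rV[R]_n) : Prop :=
  forall y, X y -> omega x + dotv g (y - x) <= omega y.

Definition deriv_on (R : realType) (n : nat) (X : set 'rV[R]_n)
  (omega : 'rV[R]_n -> R) (omega' : 'rV[R]_n -> 'rV[R]_n) : Prop :=
  forall x y, X x -> X y ->
    (fun s : R => (omega (x + s *: (y - x)) - omega x) / s) @ 0^'+
      --> dotv (omega' x) (y - x).

Definition bregman (R : realType) (n : nat) (omega : 'rV[R]_n -> R)
  (omega' : 'rV[R]_n -> 'rV[R]_n) (x y : 'rV[R]_n) : R :=
  omega y - omega x - dotv (omega' x) (y - x).

Definition OE_iterates (R : realType) (n : nat) (X : set 'rV[R]_n)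
  (F : 'rV[R]_n -> 'rV[R]_n) (omega : 'rV[R]_n -> R)
  (omega' : 'rV[R]_n -> 'rV[R]_n) (gamma lambda : nat -> R) (k : nat)
  (xs : nat -> 'rV[R]_n) : Prop :=
  [/\ X (xs 1%N), xs 0%N = xs 1%N &
      forall t : nat, (1 <= t <= k)%N ->
        let g := F (xs t) + lambda t *: (F (xs t) - F (xs t.-1)) in
        X (xs t.+1) /\
        forall y, X y ->
          gamma t * dotv g (xs t.+1) + bregman omega omega' (xs t) (xs t.+1)
          <= gamma t * dotv g y + bregman omega omega' (xs t) y].

(* Main.v *)
Require Import Defs.
From HB Require Import structures.
From mathcomp Require Import all_boot all_order all_algebra.
From mathcomp Require Import all_classical all_reals all_analysis.
From mathcomp Require Import ring lra zify.
Import Order.TTheory GRing.Theory Num.Theory.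
Import numFieldNormedType.Exports.
Local Open Scope classical_set_scope.
Local Open Scope ring_scope.

Section Dot.
Variables (R : realType) (n : nat).
Implicit Types (x y z : 'rV[R]_n).
Lemma dotvC x z : dotv x z = dotv z x.
Proof. by rewrite /dotv; apply: eq_bigr => i _; rewrite mulrC. Qed.
Lemma dotvDl x y z : dotv (x + y) z = dotv x z + dotv y z.
Proof. by rewrite /dotv -big_split; apply: eq_bigr => i _; rewrite mxE mulrDl. Qed.
Lemma dotvZl (a : R) x z : dotv (a *: x) z = a * dotv x z.
Proof. by rewrite /dotv mulr_sumr; apply: eq_bigr => i _; rewrite mxE mulrA. Qed.
Lemma dotvNl x z : dotv (- x) z = - dotv x z.
Proof. by rewrite -scaleN1r dotvZl mulN1r. Qed.
Lemma dotvBl x y z : dotv (x - y) z = dotv x z - dotv y z.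
Proof. by rewrite dotvDl dotvNl. Qed.
Lemma dotvDr x y z : dotv z (x + y) = dotv z x + dotv z y.
Proof. by rewrite !(dotvC z) dotvDl. Qed.
Lemma dotvZr (a : R) x z : dotv z (a *: x) = a * dotv z x.
Proof. by rewrite !(dotvC z) dotvZl. Qed.
Lemma dotvNr x z : dotv z (- x) = - dotv z x.
Proof. by rewrite !(dotvC z) dotvNl. Qed.
Lemma dotvBr x y z : dotv z (x - y) = dotv z x - dotv z y.
Proof. by rewrite !(dotvC z) dotvBl. Qed.
Lemma dotv0l z : dotv 0 z = 0.
Proof. by rewrite -(scale0r (0 : 'rV[R]_n)) dotvZl mul0r. Qed.
Lemma dotv0r z : dotv z 0 = 0.
Proof. by rewrite dotvC dotv0l. Qed.
End Dot.

Section NormFacts.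
Variables (R : realType) (n : nat) (N : 'rV[R]_n -> R).
Hypothesis hN : is_norm N.

Lemma N0 : N 0 = 0.
Proof. case: hN => _ hZ _. by rewrite -(scale0r (0 : 'rV[R]_n)) hZ normr0 mul0r. Qed.

Lemma NN x : N (- x) = N x.
Proof. case: hN => _ hZ _. by rewrite -scaleN1r hZ normrN normr1 mul1r. Qed.

Lemma Nge0 x : 0 <= N x.
Proof.
case: hN => _ _ hD. have := hD x (- x). rewrite subrr N0 NN. lra.
Qed.

Lemma NB x y : `|N x - N y| <= N (x - y).
Proof.
case: hN => _ _ hD. rewrite ler_norml; apply/andP; split.
- have := hD (y - x) x. rewrite subrK -opprB NN. lra.
- have := hD (x - y) y. rewrite subrK. lra.
Qed.

Lemma Nsum m (f : 'I_m -> 'rV[R]_n) : N (\sum_(i < m) f i) <= \sum_(i < m) N (f i).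
Proof.
case: hN => _ _ hD.
apply: (big_ind2 (fun a b => N a <= b)); first by rewrite N0.
- move=> a b c d h1 h2. apply: le_trans (hD _ _) _. exact: lerD.
- by [].
Qed.

Lemma entry_le_norm (x : 'rV[R]_n) i : `|x ord0 i| <= `|x|.
Proof.
have /mapP[j Hj ->] : `|x ord0 i| \in [seq `|x y.1 y.2| | y : 'I_1 * 'I_n].
  by apply/mapP; exists (ord0, i) => //=; rewrite mem_enum.
by rewrite [leRHS]/Num.norm /= mx_normrE; apply/bigmax_geP; right => /=; exists j.
Qed.

Lemma N_upper : exists M, 0 <= M /\ forall x, N x <= M * `|x|.
Proof.
case: hN => _ hZ _.
exists (\sum_(i < n) N (delta_mx ord0 i)); split.
  by apply: sumr_ge0 => i _; exact: Nge0.
move=> x. rewrite {1}(row_sum_delta x). apply: le_trans (Nsum _ _) _.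
rewrite mulr_suml. apply: ler_sum => i _. rewrite hZ mulrC.
apply: ler_wpM2l; first exact: Nge0. exact: entry_le_norm.
Qed.

Lemma N_cont : continuous N.
Proof.
have [M [M0 HM]] := N_upper.
move=> x. apply/(@cvgrPdist_le _ R^o _ (nbhs x) _ N (N x)) => e e0.
have : \forall t \near x, `|x - t| <= e / (M + 1).
  apply: (proj1 (@cvgrPdist_le _ _ _ (nbhs x) _ id x) (@cvg_id _ (nbhs x))).
  by apply: divr_gt0 => //; lra.
apply: filterS => t Ht.
apply: le_trans (NB _ _) _. apply: le_trans (HM _) _.
have M1 : 0 < M + 1 by lra.
rewrite ler_pdivlMr // in Ht.
have : 0 <= `|x - t| by [].
nra.
Qed.


Lemma N_lower : exists C, 0 < C /\ forall x, `|x| <= C * N x.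
Proof.
case: hN => hN0 hZ _.
pose S := [set v : 'rV[R]_n | `|v| = 1].
have inS x : x != 0 -> S (`|x|^-1 *: x).
  move=> x0; rewrite /S /= normrZ normrV ?unitfE ?normr_eq0 //.
  by rewrite normr_id mulVf // normr_eq0.
have [[c0 Sc0]|S0] := pselect (S !=set0).
- have cS : compact S.
    apply: bounded_closed_compact.
      exists 1; split => // M M1 v /= ->; exact: ltW.
    have -> : S = (@Num.norm _ 'rV[R]_n) @^-1` [set x : R | x = 1] by [].
    apply: preimage_closed; last exact: closed_eq.
    by move=> y _; exact: norm_continuous.
  have [c cS' cmin] := EVT_min_rV (ex_intro _ c0 Sc0) cS (continuous_subspaceT N_cont).
  have Sc : S c by rewrite inE in cS'.
  have Nc0 : 0 < N c.
    rewrite lt_def Nge0 andbT; apply/eqP => /hN0 c0'.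
    by move: Sc; rewrite /S /= c0' normr0 => /esym/eqP; rewrite oner_eq0.
  exists (N c)^-1; split; first by rewrite invr_gt0.
  move=> x; have [->|x0] := eqVneq x 0; first by rewrite normr0 N0 mulr0.
  have := cmin _ (mem_set (inS x x0)); rewrite hZ normrV ?unitfE ?normr_eq0 // normr_id.
  have nx : 0 < `|x| by rewrite normr_gt0.
  move=> H.
  have H' : N c * `|x| <= N x.
    by move: H; rewrite -(ler_pM2r nx) mulrAC mulVf ?mul1r // gt_eqF.
  by rewrite -(ler_pM2l Nc0) mulrA mulfV ?mul1r ?gt_eqF // mulrC.
- exists 1; split => // x; have [->|x0] := eqVneq x 0; first by rewrite normr0 N0 mulr0.
  by exfalso; apply: S0; exists (`|x|^-1 *: x); exact: inS.
Qed.


Lemma dual_bound z v : dotv v z <= dual_norm N z * N v.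
Proof.
case: hN => hN0 hZ _.
have [C [C0 HC]] := N_lower.
pose E := [set dotv x z | x in [set x | N x <= 1]].
have ubE : has_ubound E.
  exists (\sum_(i < n) C * `|z ord0 i|) => _ [x /= Nx1 <-].
  rewrite /dotv; apply: ler_sum => i _.
  apply: le_trans (ler_norm _) _; rewrite normrM ler_wpM2r //.
  apply: le_trans (entry_le_norm _ i) _; apply: le_trans (HC x) _.
  by rewrite -[leRHS]mulr1 ler_wpM2l // ltW.
have hs := ub_le_sup ubE.
have [/hN0 ->|Nv0] := eqVneq (N v) 0; first by rewrite dotv0l N0 mulr0.
have Nvp : 0 < N v by rewrite lt_def Nv0 Nge0.
have : E (dotv ((N v)^-1 *: v) z).
  exists ((N v)^-1 *: v) => //=.
  by rewrite hZ ger0_norm ?invr_ge0 ?Nge0 // mulVf.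
move/hs; rewrite dotvZl => H.
by rewrite mulrC -ler_pdivrMl // mulrC.
Qed.

End NormFacts.

Arguments N0 {R n N}. Arguments NN {R n N}. Arguments Nge0 {R n N}.
Arguments dual_bound {R n N}.

Lemma small_s (R : realType) (a b c : R) :
  (forall s, 0 < s <= 1 -> a <= b + s * c) -> a <= b.
Proof.
move=> H; have [c0|c0] := lerP c 0.
  have := H 1; rewrite lexx ltr01 mul1r => /(_ isT); lra.
rewrite leNgt; apply/negP => ab.
pose s := (a - b) / (a - b + c).
have d0 : 0 < a - b + c by lra.
have sE : s * (a - b + c) = a - b by rewrite /s mulfVK // gt_eqF.
have s0 : 0 < s by rewrite /s divr_gt0 // subr_gt0.
have s1 : s <= 1 by rewrite /s ler_pdivrMr // mul1r; lra.
have := H s; rewrite s0 s1 => /(_ isT).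
nra.
Qed.

Section Breg.
Variables (R : realType) (n : nat) (N : 'rV[R]_n -> R) (X : set 'rV[R]_n).
Variables (omega : 'rV[R]_n -> R) (omega' : 'rV[R]_n -> 'rV[R]_n).

Lemma comb_eq (s : R) (a b : 'rV[R]_n) : s *: b + (1 - s) *: a = a + s *: (b - a).
Proof. by rewrite scalerBl scale1r scalerBr addrCA. Qed.

Lemma breg_lb a b :
  is_convex_set X -> strongly_convex_on N X omega 1 ->
  (forall x, X x -> subgrad_on X omega x (omega' x)) ->
  X a -> X b -> N (b - a) ^+ 2 / 2 <= bregman omega omega' a b.
Proof.
move=> cX sc sg Xa Xb.
apply: (@small_s _ _ _ (N (b - a) ^+ 2 / 2)) => s /andP[s0 s1].
have Xp : X (s *: b + (1 - s) *: a) by apply: cX => //; rewrite ltW.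
have H1 := sc b a s Xb Xa (ltac:(by rewrite ltW)).
have H2 := sg a Xa _ Xp.
rewrite comb_eq addrAC subrr add0r dotvZr in H2.
rewrite comb_eq in H1.
rewrite /bregman.
set G := dotv (omega' a) (b - a) in H2 *.
set P := omega (a + s *: (b - a)) in H1 H2.
set M := N (b - a) ^+ 2 in H1 *.
have Hs : s * (M / 2) <= s * (omega b - omega a - G + s * (M / 2)) by nra.
by rewrite ler_pM2l in Hs.
Qed.

End Breg.
Arguments breg_lb {R n N X omega omega'}.

Lemma three_point (R : realType) (n : nat) (X : set 'rV[R]_n)
  (omega : 'rV[R]_n -> R) (omega' : 'rV[R]_n -> 'rV[R]_n) (gam : R) (g u w x : 'rV[R]_n) :
  is_convex_set X -> deriv_on X omega omega' ->
  X w -> X x ->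
  (forall y, X y -> gam * dotv g w + bregman omega omega' u w
                    <= gam * dotv g y + bregman omega omega' u y) ->
  gam * dotv g (w - x) + bregman omega omega' u w + bregman omega omega' w x
    <= bregman omega omega' u x.
Proof.
move=> cX dX Xw Xx hmin.
set d := x - w.
set c := dotv (omega' u) d - gam * dotv g d.
have key : c <= dotv (omega' w) d.
  apply: (cvgr_to_ge (dX w x Xw Xx)).
  near=> s.
  have s0 : 0 < s by near: s; exact: nbhs_right_gt.
  have s1 : s < 1 by near: s; exact: nbhs_right_lt.
  have Xy : X (s *: x + (1 - s) *: w) by apply: cX => //; rewrite !ltW.
  have := hmin _ Xy.
  rewrite comb_eq /bregman -/d.
  have -> : w + s *: d - u = (w - u) + s *: d by rewrite addrAC.
  rewrite !dotvDr !dotvZr.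
  set P := omega (w + s *: d).
  move=> H.
  rewrite ler_pdivlMr // /c.
  nra.
rewrite /bregman.
have -> : x - u = d + (w - u) by rewrite /d addrA subrK.
have -> : w - x = - d by rewrite /d opprB.
rewrite -/d; set e := w - u; rewrite dotvDr dotvNr.
move: key; rewrite /c. lra.
Unshelve. all: by end_near.
Qed.

Arguments three_point {R n X omega omega' gam g u w x}.

Theorem proposition2p1 (R : realType) (n : nat)
  (X : set 'rV[R]_n) (N : 'rV[R]_n -> R) (F : 'rV[R]_n -> 'rV[R]_n) (L : R)
  (omega : 'rV[R]_n -> R) (omega' : 'rV[R]_n -> 'rV[R]_n)
  (gamma lambda theta : nat -> R) (k : nat) (xs : nat -> 'rV[R]_n) :
  X !=set0 -> closed X -> is_convex_set X ->
  is_norm N ->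
  0 < L ->
  (forall x1 x2, X x1 -> X x2 ->
     dual_norm N (F x1 - F x2) <= L * N (x1 - x2)) ->
  strongly_convex_on N X omega 1 ->
  (forall x, X x -> subgrad_on X omega x (omega' x)) ->
  deriv_on X omega omega' ->
  (forall t, 0 <= gamma t) -> (forall t, 0 <= lambda t) ->
  (forall t, 0 <= theta t) ->
  OE_iterates X F omega omega' gamma lambda k xs ->
  (forall t : nat, (1 <= t <= k)%N ->
     theta t.+1 * gamma t.+1 * lambda t.+1 = gamma t * theta t /\
     4 * L ^+ 2 * theta t * gamma t ^+ 2 * lambda t ^+ 2 <= theta t.-1) ->
  forall x, X x ->
    \sum_(1 <= t < k.+1)
        theta t * (gamma t * dotv (F (xs t.+1)) (xs t.+1 - x)
                   + bregman omega omega' (xs t.+1) x)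
      - L ^+ 2 * theta k * gamma k ^+ 2 * N (xs k.+1 - x) ^+ 2
    <= \sum_(1 <= t < k.+1) theta t * bregman omega omega' (xs t) x.
Proof.
move=> _ _ cX hN L0 Lip sc sg dX g0 l0 th0 [X1 x01 Hit] Hpar x Xx.
have Xs : forall t, (t <= k.+1)%N -> X (xs t).
  case=> [|t] ht; first by rewrite x01.
  case: t ht => [|t] ht; first by [].
  by have [] := Hit t.+1 (ltac:(by rewrite /=; lia)).
pose D t := F (xs t) - F (xs t.-1).
pose r t := N (xs t.+1 - xs t).
pose e t := xs t.+1 - x.
pose P t := theta t * gamma t * dotv (D t.+1) (e t).
pose Q t := P t - theta t * r t ^+ 2 / 4.
have D1 : D 1%N = 0 by rewrite /D /= x01 subrr.
have Q0 : Q 0%N = 0.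
  by rewrite /Q /P /r D1 dotv0l mulr0 /= x01 subrr (N0 hN) expr0n /= mulr0 mul0r subr0.
have rge0 t : 0 <= r t by apply: (Nge0 hN).
have step : forall t, (1 <= t <= k)%N ->
  theta t * (gamma t * dotv (F (xs t.+1)) (e t) + bregman omega omega' (xs t.+1) x)
  <= theta t * bregman omega omega' (xs t) x + Q t - Q t.-1.
  move=> t /andP[t1 tk].
  have [Xt1 hmin] := Hit t (ltac:(by apply/andP)).
  have Xt : X (xs t) by apply: Xs; lia.
  have Xtm : X (xs t.-1) by apply: Xs; lia.
  have TP := three_point cX dX Xt1 Xx hmin.
  have LB := breg_lb _ _ cX sc sg Xt Xt1.
  rewrite dotvDl dotvZl in TP.
  rewrite -/(e t) -/(r t) in TP LB.
  have hD1 : dotv (D t.+1) (e t) = dotv (F (xs t.+1)) (e t) - dotv (F (xs t)) (e t).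
    by rewrite dotvBl.
  have hsplit : dotv (D t) (e t) = dotv (D t) (e t.-1) + dotv (D t) (xs t.+1 - xs t).
    rewrite -dotvDr /e prednK //; congr dotv.
    by rewrite [RHS]addrC [RHS]addrA subrK.
  rewrite -/(D t) hsplit in TP.
  have htel : theta t * gamma t * lambda t * dotv (D t) (e t.-1) = P t.-1.
    case: t t1 tk {TP LB hD1 hsplit Xt1 hmin Xt Xtm} => [|t] // _ tk.
    case: t tk => [|t] tk; first by rewrite D1 /P /= D1 !dotv0l !mulr0.
    have [h _] := Hpar t.+1 (ltac:(by apply/andP; split => //; lia)).
    by rewrite /P /= h (mulrC (gamma _)).
  have cr : - dotv (D t) (xs t.+1 - xs t) <= L * r t.-1 * r t.
    rewrite -dotvNr dotvC.
    apply: le_trans (dual_bound hN _ _) _.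
    rewrite (NN hN) -/(r t) ler_wpM2r //.
    by have := Lip _ _ Xt Xtm; rewrite /r prednK.
  have [_ hpar] := Hpar t (ltac:(by apply/andP)).
  set th := theta t in TP htel hpar *.
  set ga := gamma t in TP htel hpar *.
  set la := lambda t in TP htel hpar *.
  have thp := th0 t. have gap := g0 t. have lap := l0 t.
  have rp := rge0 t. have rp' := rge0 t.-1.
  have h1 : th * (r t ^+ 2 / 2) <= th * bregman omega omega' (xs t) (xs t.+1)
    by rewrite ler_wpM2l.
  have thgl : 0 <= th * ga * la by rewrite !mulr_ge0.
  have h2 : th * ga * la * - dotv (D t) (xs t.+1 - xs t) <= th * ga * la * (L * r t.-1 * r t)
    by rewrite ler_wpM2l.
  have h3 : 0 <= th * (r t / 2 - L * ga * la * r t.-1) ^+ 2 by rewrite mulr_ge0 // sqr_ge0.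
  have h4 : 0 <= (theta t.-1 - 4 * L ^+ 2 * th * ga ^+ 2 * la ^+ 2) * r t.-1 ^+ 2.
    by rewrite mulr_ge0 // ?sqr_ge0 // subr_ge0.
  have TPt := ler_wpM2l thp TP.
  rewrite /Q -htel.
  move: TPt h1 h2 h3 h4 hD1. rewrite /P -/th -/ga.
  set A1 := dotv (F (xs t.+1)) (e t).
  set A0 := dotv (F (xs t)) (e t).
  set B := dotv (D t.+1) (e t).
  set C := dotv (D t) (e t.-1).
  set E := dotv (D t) (xs t.+1 - xs t).
  set V01 := bregman omega omega' (xs t) (xs t.+1).
  set V1 := bregman omega omega' (xs t.+1) x.
  set V0 := bregman omega omega' (xs t) x.
  set rt := r t. set rt' := r t.-1. set tm := theta t.-1.
  move=> *. nra.
have sumQ : forall m, (m <= k)%N ->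
  \sum_(1 <= t < m.+1) theta t * (gamma t * dotv (F (xs t.+1)) (xs t.+1 - x)
                                    + bregman omega omega' (xs t.+1) x)
  <= \sum_(1 <= t < m.+1) theta t * bregman omega omega' (xs t) x + Q m.
  elim=> [|m IH] hm; first by rewrite !big_geq // Q0 addr0.
  rewrite !(@big_nat_recr _ _ _ m.+1) //=.
  have := step m.+1 (ltac:(by apply/andP)).
  have := IH (ltnW hm). rewrite /e /=. lra.
have HQ : Q k <= L ^+ 2 * theta k * gamma k ^+ 2 * N (xs k.+1 - x) ^+ 2.
  have Xk : X (xs k) by apply: Xs; lia.
  have Xk1 : X (xs k.+1) by apply: Xs.
  have hb : dotv (D k.+1) (e k) <= L * r k * N (e k).
    rewrite dotvC; apply: le_trans (dual_bound hN _ _) _.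
    rewrite ler_wpM2r //; first exact: (Nge0 hN).
    exact: Lip.
  have := ler_wpM2l (mulr_ge0 (th0 k) (g0 k)) hb.
  have h3 : 0 <= theta k * (r k / 2 - L * gamma k * N (e k)) ^+ 2
    by rewrite mulr_ge0 // sqr_ge0.
  move: h3; rewrite /Q /P /e.
  set B := dotv _ _. set rk := r k. set Ne := N _.
  have := th0 k. have := g0 k.
  move=> *. nra.
have := sumQ k (leqnn k).
lra.
Qed.
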